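(* If $G$ is a connected graph and $n\ge 1$ is an integer, then $$\dim(G)\le \dim_{n\ell}(G\odot K_n)\le n(G).$$
   Context: Graphs are finite, simple and connected; $d(u,v)$ is the shortest-path distance and $n(G)$ the number of vertices. A set $X$ of vertices resolves two vertices $u,v$ if some $x\in X$ satisfies $d(u,x)\neq d(v,x)$. $X$ is a resolving set if it resolves every pair of distinct vertices; the metric dimension $\dim(G)$ is the minimum size of a resolving set. $X$ is a nonlocal resolving set if it resolves every pair of distinct non-adjacent vertices; the nonlocal metric dimension $\dim_{n\ell}$ is the minimum size of a nonlocal resolving set. For $V(G)=\{g_1,\dots,g_{n(G)}\}$, the corona product $G\odot H$ is obtained from the disjoint union of $G$ and $n(G)$ copies $H_1,\dots,H_{n(G)}$ of $H$ by joining $g_i$ to every vertex of $H_i$ for each $i$. *)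

(* Defs.v *)
From mathcomp Require Import all_boot.
Set Implicit Arguments. Unset Strict Implicit. Unset Printing Implicit Defensive.

Definition simple_graph (T : finType) (e : rel T) :=
  symmetric e /\ irreflexive e.
Definition connected_graph (T : finType) (e : rel T) :=
  forall x y : T, connect e x y.

Definition walk_of_len (T : finType) (e : rel T) (u v : T) (k : nat) : bool :=
  [exists p : k.-tuple T, path e u p && (last u p == v)].

(* shortest-path distance: least k such that a walk of length k from u to v
   exists (a shortest walk is a shortest path).  In a connected graph such k
   is < #|T|; if none exists the value is #|T| (irrelevant for connected graphs). *)
Definition dist (T : finType) (e : rel T) (u v : T) : nat :=
  find (walk_of_len e u v) (iota 0 #|T|).

Definition resolves (T : finType) (e : rel T) (X : {set T}) (u v : T) : bool :=
  [exists x in X, dist e u x != dist e v x].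

Definition resolving (T : finType) (e : rel T) (X : {set T}) : bool :=
  [forall u, forall v, (u != v) ==> resolves e X u v].

Definition nonlocal_resolving (T : finType) (e : rel T) (X : {set T}) : bool :=
  [forall u, forall v, ((u != v) && ~~ e u v) ==> resolves e X u v].

Definition metric_dim (T : finType) (e : rel T) : nat :=
  #| [arg min_(X < [set: T] | resolving e X) #|X| ] |.

Definition nonlocal_metric_dim (T : finType) (e : rel T) : nat :=
  #| [arg min_(X < [set: T] | nonlocal_resolving e X) #|X| ] |.

Definition complete_graph (n : nat) : rel 'I_n := fun i j => i != j.
Arguments complete_graph n : clear implicits.

(* corona product G ⊙ H: vertices inl g (vertices of G) and inr (g, h)
   (vertex h of the copy H_g attached to g). *)
Definition corona (T U : finType) (e : rel T) (f : rel U) : rel (T + (T * U)) :=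
  fun x y =>
    match x, y with
    | inl a, inl b => e a b
    | inr (a, h), inr (b, k) => (a == b) && f h k
    | inl a, inr (b, _) => a == b
    | inr (a, _), inl b => a == b
    end.

(* Main.v *)
Require Import Defs.
From mathcomp Require Import all_boot zify.
Set Implicit Arguments. Unset Strict Implicit.

Section Gen.
Variables (T : finType) (e : rel T).

Lemma walkP u v k : reflect (exists2 p : seq T, size p = k & path e u p && (last u p == v))
  (walk_of_len e u v k).
Proof.
apply: (iffP existsP) => [[p Hp]|[p Hs Hp]].
  by exists (val p) => //; exact: size_tuple.
by exists (Tuple (introT eqP Hs)).
Qed.

Lemma dist_le u v k : walk_of_len e u v k -> dist e u v <= k.
Proof.
move=> W; rewrite /dist; case: (ltnP k #|T|) => hk.
  rewrite leqNgt; apply/negP => lt.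
  by have := before_find 0 lt; rewrite nth_iota // add0n W.
by apply: leq_trans (find_size _ _) _; rewrite size_iota.
Qed.

Lemma dist_walk u v : connect e u v -> walk_of_len e u v (dist e u v).
Proof.
move/connectP=> [p pp ->]; case/shortenP: pp => p' pp' up' _.
have hk : size p' < #|T|.
  by have := max_card (mem (u :: p')); rewrite (card_uniqP up').
have W : walk_of_len e u (last u p') (size p') by apply/walkP; exists p'; rewrite ?pp' ?eqxx.
have Hh : has (walk_of_len e u (last u p')) (iota 0 #|T|).
  by apply/hasP; exists (size p') => //; rewrite mem_iota.
have := nth_find 0 Hh; rewrite nth_iota ?add0n //.
by rewrite -[X in _ < X](size_iota 0 #|T|) -has_find.
Qed.

Lemma dist0 u : dist e u u = 0.
Proof. apply/eqP; rewrite -leqn0; apply: (@dist_le _ _ 0); apply/walkP; by exists [::]; rewrite /= ?eqxx. Qed.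

Hypothesis C : connected_graph e.

Lemma dist_eq0 u v : dist e u v = 0 -> u = v.
Proof.
move=> H; have := dist_walk (C u v); rewrite H => /walkP [p /size0nil -> /andP [_ /eqP]] //.
Qed.

Lemma dist_is1 u v : dist e u v = 1 -> e u v.
Proof.
move=> H; have := dist_walk (C u v); rewrite H => /walkP [[|w [|]]] //= _.
by rewrite andbT => /andP [? /eqP <-].
Qed.

Lemma dist_edge u v : e u v -> u != v -> dist e u v = 1.
Proof.
move=> euv nuv; have : dist e u v <= 1.
  by apply: dist_le; apply/walkP; exists [:: v]; rewrite //= euv eqxx.
have := @dist_eq0 u v; case: (dist e u v) => [|[|]] // H _.
by move: nuv; rewrite H ?eqxx.
Qed.

Lemma dist_tri a b b' : e b b' -> dist e a b' <= dist e a b + 1.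
Proof.
move=> ebb; have /walkP [p sp /andP [pp /eqP lp]] := dist_walk (C a b).
apply: dist_le; apply/walkP; exists (rcons p b').
  by rewrite size_rcons sp addn1.
by rewrite rcons_path pp lp ebb last_rcons eqxx.
Qed.

Lemma lip (f : T -> nat) : (forall x y, e x y -> f y <= f x + 1) ->
  forall x p, path e x p -> f (last x p) <= f x + size p.
Proof.
move=> Hf x p; elim: p x => [|y p IH] x /=; first by rewrite addn0.
move/andP=> [exy pp]; have := IH _ pp; have := Hf _ _ exy; lia.
Qed.

End Gen.

Section Cor.
Variables (T : finType) (e : rel T) (n : nat).
Hypothesis S : simple_graph e.
Hypothesis C : connected_graph e.
Let H := corona e (complete_graph n).

Definition proj (x : T + (T * 'I_n)) : T := match x with inl a => a | inr (a, _) => a end.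

Lemma lift_path a p : path e a p -> path H (inl a) (map inl p).
Proof. by rewrite path_map. Qed.

Lemma conH : connected_graph H.
Proof.
have up : forall x, connect H x (inl (proj x)) /\ connect H (inl (proj x)) x.
  by case=> [a|[a i]] /=; split => //; apply: connect1; rewrite /H /corona /= eqxx.
have ll : forall a b, connect H (inl a) (inl b).
  move=> a b; have /connectP [p pp ->] := C a b.
  by apply/connectP; exists (map inl p); rewrite ?lift_path // last_map.
move=> x y; have [h1 _] := up x; have [_ h2] := up y.
exact: connect_trans h1 (connect_trans (ll _ _) h2).
Qed.

Section Base.
Variables (a : T) (i : 'I_n).

Definition f (x : T + (T * 'I_n)) : nat :=
  match x with inl b => dist e a b + 1 | inr (b, _) => if b == a then 0 else dist e a b + 2 end.

Lemma f_lip x y : H x y -> f y <= f x + 1.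
Proof.
case: x => [b|[b j]]; case: y => [b'|[b' j']]; rewrite /H /corona /=.
- move=> ebb; have := dist_tri C a ebb; lia.
- move/eqP <-; case: eqP => _; lia.
- move/eqP <-; case: eqP => [->|_]; rewrite ?dist0; lia.
- by case/andP => /eqP <- _; lia.
Qed.

Lemma lowH y : f y <= dist H (inr (a, i)) y.
Proof.
have /walkP [p <- /andP [pp /eqP <-]] := dist_walk (conH (inr (a, i)) y).
have := lip f_lip pp; rewrite /= eqxx; lia.
Qed.

Lemma upG c : walk_of_len H (inr (a, i)) (inl c) (dist e a c + 1).
Proof.
have /walkP [p sp /andP [pp /eqP lp]] := dist_walk (C a c).
apply/walkP; exists (inl a :: map inl p).
  by rewrite /= size_map sp addn1.
rewrite /= {1}/H /corona eqxx lift_path //=.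
by rewrite (last_map inl p a) lp.
Qed.

Lemma dH1 c : c != a -> dist H (inr (a, i)) (inl c) = dist e a c + 1.
Proof.
move=> ca; apply/eqP; rewrite eqn_leq dist_le ?upG //=.
by have := lowH (inl c).
Qed.

Lemma dH2 c k : c != a -> dist H (inr (a, i)) (inr (c, k)) = dist e a c + 2.
Proof.
move=> ca; apply/eqP; rewrite eqn_leq; apply/andP; split; last first.
  by have := lowH (inr (c, k)); rewrite /= (negbTE ca).
have /walkP [p sp /andP [pp /eqP lp]] := upG c.
apply: dist_le; apply/walkP; exists (rcons p (inr (c, k))).
  by rewrite size_rcons sp; lia.
by rewrite rcons_path pp lp last_rcons eqxx /H /corona /= eqxx.
Qed.

End Base.
End Cor.

Lemma res_mono (T : finType) (e : rel T) (X Y : {set T}) u v :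
  X \subset Y -> resolves e X u v -> resolves e Y u v.
Proof.
move=> sXY /existsP [x /andP [xX d]]; apply/existsP; exists x.
by rewrite (subsetP sXY _ xX).
Qed.

Lemma resolving_T (T : finType) (e : rel T) : connected_graph e -> resolving e setT.
Proof.
move=> C; apply/forallP => u; apply/forallP => v; apply/implyP => nuv.
apply/existsP; exists u; rewrite in_setT dist0 /=.
by apply/eqP => /esym /(dist_eq0 C) E; move: nuv; rewrite E eqxx.
Qed.

Theorem theorem3p3 (T : finType) (e : rel T) (n : nat) :
  simple_graph e -> connected_graph e -> 1 <= n ->
  metric_dim e <= nonlocal_metric_dim (corona e (complete_graph n)) /\
  nonlocal_metric_dim (corona e (complete_graph n)) <= #|T|.
Proof.
move=> Sg Cg n1; set H := corona e (complete_graph n).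
have CH : connected_graph H := @conH _ _ n Cg.
pose i0 : 'I_n := Ordinal n1.
pose Y := [set inl g | g : T] : {set T + (T * 'I_n)}.
have YP : nonlocal_resolving H Y.
  apply/forallP => u; apply/forallP => v; apply/implyP => /andP [nuv neuv].
  case: u nuv neuv => [a|[a k]] nuv neuv.
    apply/existsP; exists (inl a); rewrite imset_f // dist0 /=.
    by apply/eqP => /esym /(dist_eq0 CH) E; move: nuv; rewrite E eqxx.
  case: v nuv neuv => [b|[b k']] nuv neuv.
    apply/existsP; exists (inl b); rewrite imset_f // dist0 /=.
    by apply/eqP => /(dist_eq0 CH) E; move: nuv; rewrite E eqxx.
  apply/existsP; exists (inl a); rewrite imset_f //= (@dist_edge _ H) //; last first.
    by rewrite /H /corona /= eqxx.
  apply/eqP => /esym /(dist_is1 CH); rewrite /H /corona /= => /eqP ba.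
  move: neuv nuv; rewrite /H /corona /= ba eqxx /= /complete_graph negbK => /eqP ->.
  by rewrite eqxx.
have TP : nonlocal_resolving H setT.
  apply/forallP => u; apply/forallP => v; apply/implyP => uv.
  apply: (@res_mono _ _ Y); first exact: subsetT.
  by move/forallP: YP => /(_ u) /forallP /(_ v) /implyP; apply.
rewrite /nonlocal_metric_dim; case: arg_minnP => // X PX minX; split; last first.
  apply: leq_trans (minX _ YP) _; rewrite card_imset; last by move=> ? ? [].
  by [].

pose W := [set proj x | x in X].
apply: (@leq_trans #|W|); last exact: leq_imset_card.
have WP : resolving e W.
  apply/forallP => u; apply/forallP => v; apply/implyP => nuv.
  have : (inr (u, i0) != inr (v, i0) :> T + (T * 'I_n)) && ~~ H (inr (u, i0)) (inr (v, i0)).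
    rewrite /H /corona /= (negbTE nuv) /= andbT; apply/eqP => -[E]; by rewrite E eqxx in nuv.
  move/forallP: PX => /(_ (inr (u, i0))) /forallP /(_ (inr (v, i0))) /implyP P.
  move/P => /existsP [x /andP [xX dx]].
  apply/existsP; exists (proj x); rewrite imset_f //=.
  have [cu|cu] := eqVneq (proj x) u.
    rewrite cu dist0; apply/eqP => /esym /(dist_eq0 Cg) E; by move: nuv; rewrite E eqxx.
  have [cv|cv] := eqVneq (proj x) v.
    rewrite cv dist0; apply/eqP => /(dist_eq0 Cg) E; by move: nuv; rewrite E eqxx.
  apply: contra dx; case: x xX cu cv => [c|[c k]] _ /= cu cv /eqP E.
    by rewrite !dH1 // E.
  by rewrite !dH2 // E.
rewrite /metric_dim; case: arg_minnP; first exact: resolving_T.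
by move=> Z _ minZ; apply: minZ.
Qed.
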